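(* For every weak independence relation $\diamond$ on the analysis instance $\mathcal{D}$, and every sequence of transformers $\sigma\in\mathrm{runs}(\mathcal{D})$, there is a unique configuration $C$ of $\mathcal{U}_{\mathcal{D},\diamond}$ such that $\sigma\in\mathrm{inter}(C)$.
   Context: An analysis instance $\mathcal{D}=\langle D,\sqsubseteq,F,d_0\rangle$ consists of a lattice $\langle D,\sqsubseteq,\sqcup,\sqcap\rangle$ with least element $\bot$, a set $F$ of monotone, bottom-strict transformers, and an initial element $d_0$. A transformer $f$ is enabled at $d$ if $f(d)\neq\bot$. For $\sigma=f_1\ldots f_m$, $\mathrm{state}(\sigma)=(f_m\circ\cdots\circ f_1)(d_0)$; $\sigma$ is a run if $\mathrm{state}(\sigma)\neq\bot$ and $\mathrm{runs}(\mathcal{D})$ is the set of runs; $\mathrm{reach}(\mathcal{D})$ is the set of reachable elements. A relation $\diamond\subseteq F\times F$ is a weak independence if it is symmetric, irreflexive, and $f\diamond f'$ implies $f(f'(d))=f'(f(d))$ for every $d\in\mathrm{reach}(\mathcal{D})$. A labelled prime event structure (PES) is $\langle E,<,\#,h\rangle$ with $<$ a strict partial order with finite down-sets, $\#$ a symmetric irreflexive conflict relation inherited along $<$, and a labelling $h$. A configuration is a finite causally closed, conflict-free set of events. The interleavings $\mathrm{inter}(C)$ are the label sequences of the linearizations of $C$ respecting $<$. The state of $C$, $\mathrm{state}(C)$, is the greatest lower bound (meet) in $D$ of $\{\mathrm{state}(\sigma)\colon\sigma\in\mathrm{inter}(C)\}$. The unfolding $\mathcal{U}_{\mathcal{D},\diamond}$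 is obtained by starting from the empty PES and repeatedly adding events $e=\langle f,C\rangle$, where $C$ is a configuration, $f$ is enabled at $\mathrm{state}(C)$ and $\neg(f\diamond h(e'))$ for every $<$-maximal $e'\in C$; one sets $e'<e$ for all $e'\in C$, $e'\# e$ for all other events $e'\notin C$ with $\neg(f\diamond h(e'))$, and $h(e)=f$; this is saturated until no new event can be added. *)

(* Defs.v *)
From HB Require Import structures.
From Stdlib Require List.
From mathcomp Require Import all_boot order.
Set Implicit Arguments. Unset Strict Implicit. Unset Printing Implicit Defensive.
Import Order.TTheory.
Local Open Scope order_scope.

(* Transformers are given by a type of names F with interpretation app. *)

Definition state {disp : Order.disp_t} {D : bLatticeType disp} {F : Type}
  (app : F -> D -> D) (d0 : D) (s : seq F) : D :=
  foldl (fun d f => app f d) d0 s.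

Definition is_run {disp : Order.disp_t} {D : bLatticeType disp} {F : Type}
  (app : F -> D -> D) (d0 : D) (s : seq F) : Prop :=
  state app d0 s <> \bot.

Definition reach {disp : Order.disp_t} {D : bLatticeType disp} {F : Type}
  (app : F -> D -> D) (d0 : D) (d : D) : Prop :=
  exists s, is_run app d0 s /\ state app d0 s = d.

Definition monotone_transformers {disp : Order.disp_t} {D : bLatticeType disp}
  {F : Type} (app : F -> D -> D) : Prop :=
  forall f (x y : D), x <= y -> app f x <= app f y.

Definition bottom_strict {disp : Order.disp_t} {D : bLatticeType disp}
  {F : Type} (app : F -> D -> D) : Prop :=
  forall f, app f \bot = \bot.

Definition weak_independence {disp : Order.disp_t} {D : bLatticeType disp}
  {F : Type} (app : F -> D -> D) (d0 : D) (indep : F -> F -> Prop) : Prop :=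
  (forall f g, indep f g -> indep g f) /\
  (forall f, ~ indep f f) /\
  (forall f g, indep f g -> forall d, reach app d0 d -> app f (app g d) = app g (app f d)).

Definition is_glb {disp : Order.disp_t} {D : bLatticeType disp}
  (P : D -> Prop) (x : D) : Prop :=
  (forall y, P y -> x <= y) /\ (forall z, (forall y, P y -> z <= y) -> z <= x).

(* An event <f, C> is a label together with its history C (a finite set of
   events, represented by a list); events are compared extensionally with
   ev_eq (same label, same history as sets, recursively). *)
Inductive event (F : Type) : Type := Ev : F -> list (event F) -> event F.

Definition label {F} (e : event F) : F := let: Ev f _ := e in f.
Definition hist {F} (e : event F) : list (event F) := let: Ev _ H := e in H.

Inductive ev_eq {F : Type} : event F -> event F -> Prop :=
| EvEq (f : F) (H H' : list (event F)) :
    (forall x, List.In x H -> exists y, List.In y H' /\ ev_eq x y) ->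
    (forall y, List.In y H' -> exists x, List.In x H /\ ev_eq x y) ->
    ev_eq (Ev f H) (Ev f H').

Definition mem_ev {F} (e : event F) (H : list (event F)) : Prop :=
  exists y, List.In y H /\ ev_eq e y.
Definition incl_ev {F} (H H' : list (event F)) : Prop :=
  forall x, List.In x H -> mem_ev x H'.
Definition same_set {F} (H H' : list (event F)) : Prop :=
  incl_ev H H' /\ incl_ev H' H.

Definition ev_lt {F} (e' e : event F) : Prop := mem_ev e' (hist e).
Definition ev_le {F} (e' e : event F) : Prop := ev_eq e' e \/ ev_lt e' e.

Definition direct_conflict {F} (indep : F -> F -> Prop) (e1 e2 : event F) : Prop :=
  ~ ev_eq e1 e2 /\ ~ ev_lt e1 e2 /\ ~ ev_lt e2 e1 /\ ~ indep (label e1) (label e2).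
Definition conflict {F} (indep : F -> F -> Prop) (e1 e2 : event F) : Prop :=
  exists a b, ev_le a e1 /\ ev_le b e2 /\ direct_conflict indep a b.

Definition causally_closed {F} (C : list (event F)) : Prop :=
  forall e, List.In e C -> incl_ev (hist e) C.
Definition conflict_free {F} (indep : F -> F -> Prop) (C : list (event F)) : Prop :=
  forall e1 e2, List.In e1 C -> List.In e2 C -> ~ conflict indep e1 e2.

Fixpoint lin_ok {F} (pre s : list (event F)) : Prop :=
  match s with
  | nil => True
  | e :: s' => ~ mem_ev e pre /\ incl_ev (hist e) pre /\ lin_ok (pre ++ [:: e]) s'
  end.
Definition inter {F} (C : list (event F)) (sigma : seq F) : Prop :=
  exists s, lin_ok nil s /\ same_set s C /\ map label s = sigma.

Definition is_state_conf {disp : Order.disp_t} {D : bLatticeType disp} {F : Type}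
  (app : F -> D -> D) (d0 : D) (C : list (event F)) (x : D) : Prop :=
  is_glb (fun y => exists sigma, inter C sigma /\ y = state app d0 sigma) x.

Definition maximal_in {F} (e : event F) (C : list (event F)) : Prop :=
  ~ exists e', List.In e' C /\ ev_lt e e'.

(* the event set of the unfolding U_{D,indep} (least saturated set) *)
Inductive in_unf {disp : Order.disp_t} {D : bLatticeType disp} {F : Type}
  (app : F -> D -> D) (d0 : D) (indep : F -> F -> Prop) : event F -> Prop :=
| UnfEv (f : F) (C : list (event F)) :
    (forall e, List.In e C -> in_unf app d0 indep e) ->
    causally_closed C ->
    conflict_free indep C ->
    (exists x, is_state_conf app d0 C x /\ app f x <> \bot) ->
    (forall e, List.In e C -> maximal_in e C -> ~ indep f (label e)) ->
    in_unf app d0 indep (Ev f C).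

Definition configuration {disp : Order.disp_t} {D : bLatticeType disp} {F : Type}
  (app : F -> D -> D) (d0 : D) (indep : F -> F -> Prop) (C : list (event F)) : Prop :=
  (forall e, List.In e C -> in_unf app d0 indep e) /\
  causally_closed C /\ conflict_free indep C.

(* Main.v *)
Require Import Defs.
From HB Require Import structures.
From mathcomp Require Import all_boot order.
From Stdlib Require Import Classical ClassicalEpsilon.
Set Implicit Arguments. Unset Strict Implicit.

Fixpoint ev_ind' {F : Type} (P : event F -> Prop)
  (IH : forall f l, (forall x, List.In x l -> P x) -> P (Ev f l)) (e : event F) : P e :=
  match e with
  | Ev f l => IH f l ((fix go (l : list (event F)) : forall x, List.In x l -> P x :=
       match l with
       | nil => fun x (H : List.In x nil) => False_ind _ H
       | y :: l' => fun x (H : List.In x (y :: l')) =>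
           match H with
           | or_introl E => eq_ind y P (ev_ind' IH y) x E
           | or_intror H' => go l' x H'
           end
       end) l)
  end.

Lemma In_cat {T : Type} (x : T) (s1 s2 : seq T) :
  List.In x (s1 ++ s2) <-> List.In x s1 \/ List.In x s2.
Proof.
  induction s1 as [|a s1 IH]; simpl; [tauto|]. rewrite IH; tauto.
Qed.

Lemma ev_eq_intro {F} (a b : event F) : label a = label b ->
  (forall x, List.In x (hist a) -> exists y, List.In y (hist b) /\ ev_eq x y) ->
  (forall y, List.In y (hist b) -> exists x, List.In x (hist a) /\ ev_eq x y) ->
  ev_eq a b.
Proof. destruct a, b; simpl; intros ->; constructor; auto. Qed.

Lemma ev_eq_elim {F} (a b : event F) : ev_eq a b -> label a = label b /\
  (forall x, List.In x (hist a) -> exists y, List.In y (hist b) /\ ev_eq x y) /\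
  (forall y, List.In y (hist b) -> exists x, List.In x (hist a) /\ ev_eq x y).
Proof. destruct 1; simpl; auto. Qed.

Lemma ev_eq_refl {F} (a : event F) : ev_eq a a.
Proof.
  induction a as [f l IH] using ev_ind'. apply ev_eq_intro; simpl; eauto.
Qed.

Lemma ev_eq_sym {F} (a b : event F) : ev_eq a b -> ev_eq b a.
Proof.
  revert b; induction a as [f l IH] using ev_ind'; intros b E.
  destruct (ev_eq_elim E) as [L [H1 H2]]; simpl in *.
  apply ev_eq_intro; simpl; auto.
  - intros x Hx. destruct (H2 x Hx) as [y [Hy E']]. eauto.
  - intros y Hy. destruct (H1 y Hy) as [x [Hx E']]. eauto.
Qed.

Lemma ev_eq_trans {F} (a b c : event F) : ev_eq a b -> ev_eq b c -> ev_eq a c.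
Proof.
  revert b c; induction a as [f l IH] using ev_ind'; intros b c E1 E2.
  destruct (ev_eq_elim E1) as [L1 [H1 H1']]; destruct (ev_eq_elim E2) as [L2 [H2 H2']];
  simpl in *.
  apply ev_eq_intro; simpl; [congruence| |].
  - intros x Hx. destruct (H1 x Hx) as [y [Hy Ey]]. destruct (H2 y Hy) as [z [Hz Ez]].
    eauto.
  - intros z Hz. destruct (H2' z Hz) as [y [Hy Ey]]. destruct (H1' y Hy) as [x [Hx Ex]].
    eauto.
Qed.

Lemma ev_eq_label {F} (a b : event F) : ev_eq a b -> label a = label b.
Proof. intros E; apply (ev_eq_elim E). Qed.

Lemma mem_ev_In {F} (x : event F) H : List.In x H -> mem_ev x H.
Proof. intros; exists x; split; auto using ev_eq_refl. Qed.

Lemma mem_ev_eq {F} (x y : event F) H : ev_eq x y -> mem_ev y H -> mem_ev x H.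
Proof. intros E [z [Hz E']]; exists z; split; eauto using ev_eq_trans. Qed.

Lemma mem_ev_incl {F} (x : event F) H H' : mem_ev x H -> incl_ev H H' -> mem_ev x H'.
Proof. intros [y [Hy E]] I. destruct (I y Hy) as [z [Hz E']]. exists z; eauto using ev_eq_trans. Qed.

Lemma incl_ev_trans {F} (H1 H2 H3 : list (event F)) :
  incl_ev H1 H2 -> incl_ev H2 H3 -> incl_ev H1 H3.
Proof. intros I1 I2 x Hx. eapply mem_ev_incl; eauto. Qed.

Lemma incl_ev_refl {F} (H : list (event F)) : incl_ev H H.
Proof. intros x Hx; apply mem_ev_In; auto. Qed.

Lemma same_set_sym {F} (H1 H2 : list (event F)) : same_set H1 H2 -> same_set H2 H1.
Proof. intros [A B]; split; auto. Qed.

Lemma same_set_trans {F} (H1 H2 H3 : list (event F)) :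
  same_set H1 H2 -> same_set H2 H3 -> same_set H1 H3.
Proof. intros [A B] [C D]; split; eapply incl_ev_trans; eauto. Qed.

Lemma mem_ev_cat {F} (x : event F) s1 s2 :
  mem_ev x (s1 ++ s2) <-> mem_ev x s1 \/ mem_ev x s2.
Proof.
  split.
  - intros [y [Hy E]]; apply In_cat in Hy; destruct Hy; [left|right]; exists y; auto.
  - intros [[y [Hy E]]|[y [Hy E]]]; exists y; rewrite In_cat; auto.
Qed.

Lemma mem_ev_nil {F} (x : event F) : ~ mem_ev x nil.
Proof. intros [y [[] _]]. Qed.

Lemma mem_ev_one {F} (x y : event F) : mem_ev x [:: y] <-> ev_eq x y.
Proof.
  split. intros [z [[<-|[]] E]]; auto. intros E; exists y; simpl; auto.
Qed.

Lemma hist_incl {F} (a b : event F) : ev_eq a b -> incl_ev (hist a) (hist b).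
Proof. intros E x Hx. destruct (ev_eq_elim E) as [_ [H1 _]]. destruct (H1 x Hx) as [y [? ?]]; exists y; auto. Qed.

Lemma ev_lt_eq {F} (a a' b b' : event F) : ev_eq a a' -> ev_eq b b' -> ev_lt a b -> ev_lt a' b'.
Proof.
  unfold ev_lt; intros Ea Eb H. apply (mem_ev_eq (ev_eq_sym Ea)) in H.
  eapply mem_ev_incl; eauto. apply hist_incl; auto.
Qed.

Lemma ev_le_eq {F} (a a' b b' : event F) : ev_eq a a' -> ev_eq b b' -> ev_le a b -> ev_le a' b'.
Proof.
  intros Ea Eb [H|H]; [left|right].
  - eauto using ev_eq_trans, ev_eq_sym.
  - eapply ev_lt_eq; eauto.
Qed.

Lemma dc_eq {F} indep (a a' b b' : event F) : ev_eq a a' -> ev_eq b b' ->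
  direct_conflict indep a b -> direct_conflict indep a' b'.
Proof.
  intros Ea Eb [N1 [N2 [N3 N4]]]; repeat split.
  - intros E; apply N1; eauto using ev_eq_trans, ev_eq_sym.
  - intros E; apply N2; eapply ev_lt_eq; eauto using ev_eq_sym.
  - intros E; apply N3; eapply ev_lt_eq; eauto using ev_eq_sym.
  - rewrite <- (ev_eq_label Ea), <- (ev_eq_label Eb); auto.
Qed.

Fixpoint depth {F} (e : event F) : nat :=
  match e with Ev _ l => (foldr (fun x m => maxn (depth x) m) 0 l).+1 end.

Lemma depth_in_aux {F} (l : list (event F)) x : List.In x l ->
  depth x <= foldr (fun x m => maxn (depth x) m) 0 l.
Proof.
  induction l as [|y l IH]; simpl; [tauto|]. intros [<-|H].
  - apply leq_maxl.
  - eapply leq_trans; [apply IH; auto| apply leq_maxr].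
Qed.

Lemma depth_bound_aux {F} (l : list (event F)) n :
  (forall x, List.In x l -> depth x <= n) -> foldr (fun x m => maxn (depth x) m) 0 l <= n.
Proof.
  induction l as [|y l IH]; simpl; auto. intros H.
  rewrite geq_max; apply/andP; split; auto.
Qed.

Lemma depth_eq {F} (a b : event F) : ev_eq a b -> depth a = depth b.
Proof.
  revert b; induction a as [f l IH] using ev_ind'; intros b E.
  destruct (ev_eq_elim E) as [_ [H1 H2]]. destruct b as [g l']; simpl in *.
  f_equal. apply/eqP; rewrite eqn_leq; apply/andP; split; apply depth_bound_aux.
  - intros x Hx. destruct (H1 x Hx) as [y [Hy Ey]]. rewrite (IH x Hx y Ey). apply depth_in_aux; auto.
  - intros y Hy. destruct (H2 y Hy) as [x [Hx Ex]]. rewrite <- (IH x Hx y Ex). apply depth_in_aux; auto.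
Qed.

Lemma depth_lt {F} (a b : event F) : ev_lt a b -> depth a < depth b.
Proof.
  intros [y [Hy E]]. rewrite (depth_eq E). destruct b as [g l]; simpl in *.
  rewrite ltnS. apply depth_in_aux; auto.
Qed.

Lemma ev_lt_irrefl {F} (a : event F) : ~ ev_lt a a.
Proof. intros H; apply depth_lt in H; rewrite ltnn in H; discriminate. Qed.
Lemma incl_In {F} (A B : list (event F)) : (forall y, List.In y A -> List.In y B) -> incl_ev A B.
Proof. intros H x Hx; apply mem_ev_In; auto. Qed.

Lemma lin_ok_cat {F} (pre u w : list (event F)) :
  lin_ok pre (u ++ w) <-> lin_ok pre u /\ lin_ok (pre ++ u) w.
Proof.
  revert pre; induction u as [|x u IH]; intros pre; simpl.
  - rewrite cats0; tauto.
  - rewrite IH -catA /=; tauto.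
Qed.

Lemma lin_ok_notin {F} (pre s : list (event F)) x :
  lin_ok pre s -> List.In x s -> ~ mem_ev x pre.
Proof.
  revert pre; induction s as [|y s IH]; intros pre; simpl; [tauto|].
  intros [N [I L]] [<-|Hx]; auto.
  intros M; apply (IH _ L Hx). apply mem_ev_cat; auto.
Qed.

Lemma lin_ok_hist {F} (pre s : list (event F)) x :
  lin_ok pre s -> List.In x s -> incl_ev (hist x) (pre ++ s).
Proof.
  revert pre; induction s as [|y s IH]; intros pre; simpl; [tauto|].
  intros [N [I L]] [<-|Hx].
  - eapply incl_ev_trans; eauto. apply incl_In; intros z Hz; rewrite In_cat; auto.
  - rewrite -cat_rcons -cats1. auto.
Qed.

Lemma lin_ok_weak {F} (pre pre' u : list (event F)) :
  lin_ok pre u -> incl_ev pre pre' -> (forall x, List.In x u -> ~ mem_ev x pre') ->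
  lin_ok pre' u.
Proof.
  revert pre pre'; induction u as [|x u IH]; intros pre pre'; simpl; auto.
  intros [N [I L]] Ip Hn. split; [auto|split; [eapply incl_ev_trans; eauto|]].
  eapply IH; eauto.
  - intros z Hz; apply In_cat in Hz; apply mem_ev_cat; destruct Hz as [Hz|Hz].
    + left; apply Ip; auto.
    + right; apply mem_ev_In; auto.
  - intros y Hy M. apply mem_ev_cat in M; destruct M as [M|M]; [apply (Hn y); auto|].
    apply (lin_ok_notin L Hy). apply mem_ev_cat; right.
    apply mem_ev_one in M; apply mem_ev_one; auto.
Qed.

Lemma lin_ok_F2 {F} (pre pre' s t : list (event F)) :
  lin_ok pre s -> List.Forall2 ev_eq s t -> same_set pre pre' -> lin_ok pre' t.
Proof.
  intros L F2; revert pre pre' L; induction F2 as [|x y s t E F2 IH]; intros pre pre' L S;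
  simpl in *; auto.
  destruct L as [N [I L]]; destruct S as [S1 S2]. split; [|split].
  - intros M. apply N. eapply mem_ev_incl; [|exact S2]. eapply mem_ev_eq; eauto.
  - eapply incl_ev_trans; [apply hist_incl, ev_eq_sym; eauto|]. eapply incl_ev_trans; eauto.
  - eapply IH; eauto. split.
    + intros z Hz; apply In_cat in Hz; apply mem_ev_cat; destruct Hz as [Hz|[<-|[]]].
      * left; apply S1; auto.
      * right; apply mem_ev_one; auto.
    + intros z Hz; apply In_cat in Hz; apply mem_ev_cat; destruct Hz as [Hz|[<-|[]]].
      * left; apply S2; auto.
      * right; apply mem_ev_one; auto using ev_eq_sym.
Qed.

Lemma F2_mem {F} (s t : list (event F)) x :
  List.Forall2 ev_eq s t -> List.In x s -> exists y, List.In y t /\ ev_eq x y.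
Proof.
  induction 1 as [|a b s t E F2 IH]; simpl; [tauto|]. intros [<-|H].
  - exists b; auto.
  - destruct (IH H) as [y [? ?]]; eauto.
Qed.

Lemma F2_sym {F} (s t : list (event F)) :
  List.Forall2 ev_eq s t -> List.Forall2 ev_eq t s.
Proof. induction 1; constructor; auto using ev_eq_sym. Qed.

Lemma F2_same {F} (s t : list (event F)) : List.Forall2 ev_eq s t -> same_set s t.
Proof.
  intros H; split; intros x Hx; [apply (F2_mem H Hx)|apply (F2_mem (F2_sym H) Hx)].
Qed.

Lemma F2_label {F} (s t : list (event F)) : List.Forall2 ev_eq s t -> map label s = map label t.
Proof. induction 1; simpl; f_equal; auto using ev_eq_label. Qed.

Lemma lin_ok_filter {F} (Q : event F -> bool) (pre pre' s : list (event F)) :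
  lin_ok pre s -> (forall x y, ev_eq x y -> Q x = Q y) ->
  (forall x, List.In x s -> Q x -> ~ mem_ev x pre') ->
  (forall x, List.In x s -> Q x -> forall w, mem_ev w (hist x) -> ~~ Q w -> mem_ev w pre') ->
  (forall w, mem_ev w pre -> Q w -> mem_ev w pre') ->
  lin_ok pre' (filter Q s).
Proof.
  revert pre pre'; induction s as [|x s IH]; intros pre pre' L HQ H0 H1 H2; simpl; auto.
  destruct L as [N [I L]].
  case_eq (Q x); intros Qx; simpl.
  - split; [apply H0; simpl; auto|split].
    + intros w Hw. destruct (Q w) eqn:Qw.
      * apply H2; [apply I; exact Hw|exact Qw].
      * apply (H1 x); [simpl; auto|exact Qx|apply mem_ev_In; exact Hw|rewrite Qw; auto].
    + eapply IH; eauto.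
      * intros y Hy Qy M. apply mem_ev_cat in M; destruct M as [M|M].
        -- apply (H0 y); simpl; auto.
        -- apply (lin_ok_notin L Hy). apply mem_ev_cat; auto.
      * intros y Hy Qy w Hw Qw. apply mem_ev_cat; left. eapply H1; simpl; eauto.
      * intros w Hw Qw. apply mem_ev_cat in Hw; apply mem_ev_cat. destruct Hw as [Hw|Hw]; auto.
  - eapply IH; eauto.
    + intros y Hy Qy; apply H0; simpl; auto.
    + intros y Hy Qy; apply H1; simpl; auto.
    + intros w Hw Qw. apply mem_ev_cat in Hw; destruct Hw as [Hw|Hw]; auto.
      apply mem_ev_one in Hw. rewrite (HQ _ _ Hw) Qx in Qw; discriminate.
Qed.
Lemma in_unf_inv {disp : Order.disp_t} {D : bLatticeType disp} {F : Type}
  (app : F -> D -> D) (d0 : D) (indep : F -> F -> Prop) e :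
  in_unf app d0 indep e ->
  (forall x, List.In x (hist e) -> in_unf app d0 indep x) /\
  causally_closed (hist e) /\ conflict_free indep (hist e) /\
  (forall x, List.In x (hist e) -> maximal_in x (hist e) -> ~ indep (label e) (label x)).
Proof. destruct 1; simpl; tauto. Qed.

Lemma ev_lt_trans {F} (x y z : event F) :
  causally_closed (hist z) -> ev_lt x y -> ev_lt y z -> ev_lt x z.
Proof.
  intros CC Hxy [y' [Hy' E]]. unfold ev_lt.
  apply (ev_lt_eq (ev_eq_refl x) E) in Hxy. unfold ev_lt in Hxy.
  eapply mem_ev_incl; eauto.
Qed.

Lemma ev_le_lt_trans {F} (x y z : event F) :
  causally_closed (hist z) -> ev_le x y -> ev_lt y z -> ev_lt x z.
Proof.
  intros CC [E|H] H'.
  - eapply ev_lt_eq; [apply ev_eq_sym; exact E|apply ev_eq_refl|exact H'].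
  - eapply ev_lt_trans; eauto.
Qed.

Lemma ev_le_refl {F} (x : event F) : ev_le x x.
Proof. left; apply ev_eq_refl. Qed.

Lemma cf_dc {F} indep (L : list (event F)) x y :
  conflict_free indep L -> mem_ev x L -> mem_ev y L -> ~ direct_conflict indep x y.
Proof.
  intros CF [x' [Hx Ex]] [y' [Hy Ey]] D. apply (CF x' y' Hx Hy).
  exists x', y'; split; [apply ev_le_refl|split; [apply ev_le_refl|]].
  eapply dc_eq; eauto.
Qed.

Lemma cf_of_dc {F} indep (L : list (event F)) :
  causally_closed L ->
  (forall a b, List.In a L -> List.In b L -> ~ direct_conflict indep a b) ->
  conflict_free indep L.
Proof.
  intros CC H e1 e2 H1 H2 [a [b [Ha [Hb D]]]].
  assert (Ma : mem_ev a L).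
  { destruct Ha as [E|Lt]. exists e1; auto. eapply mem_ev_incl; [exact Lt|]. apply CC; auto. }
  assert (Mb : mem_ev b L).
  { destruct Hb as [E|Lt]. exists e2; auto. eapply mem_ev_incl; [exact Lt|]. apply CC; auto. }
  destruct Ma as [a' [Ha' Ea]]; destruct Mb as [b' [Hb' Eb]].
  apply (H a' b' Ha' Hb'). eapply dc_eq; eauto.
Qed.

Lemma cf_indep {F} indep (L : list (event F)) x y :
  conflict_free indep L -> mem_ev x L -> mem_ev y L ->
  ~ ev_eq x y -> ~ ev_lt x y -> ~ ev_lt y x -> indep (label x) (label y).
Proof.
  intros CF Mx My N1 N2 N3. apply NNPP; intros N4.
  apply (cf_dc CF Mx My). repeat split; auto.
Qed.

Lemma split_first {F} (a : event F) s :
  mem_ev a s -> exists u a' v, s = u ++ a' :: v /\ ev_eq a a' /\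
     (forall y, List.In y u -> ~ ev_eq y a).
Proof.
  induction s as [|b s IH]; intros M; [destruct (mem_ev_nil M)|].
  destruct (classic (ev_eq a b)) as [E|N].
  - exists nil, b, s; simpl; split; auto.
  - destruct M as [y [[<-|Hy] E]]; [tauto|].
    destruct IH as [u [a' [v [-> [E' Hu]]]]]; [exists y; auto|].
    exists (b :: u), a', v; split; auto; split; auto.
    intros z [<-|Hz]; auto. intros E2; apply N; apply ev_eq_sym; auto.
Qed.
Lemma state_cat {disp : Order.disp_t} {D : bLatticeType disp} {F : Type}
  (app : F -> D -> D) (d0 : D) a b :
  state app d0 (a ++ b) = foldl (fun d f => app f d) (state app d0 a) b.
Proof. unfold state; apply foldl_cat. Qed.

Lemma foldl_bot {disp : Order.disp_t} {D : bLatticeType disp} {F : Type}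
  (app : F -> D -> D) (Hs : bottom_strict app) l :
  foldl (fun d f => app f d) \bot%O l = \bot%O.
Proof. induction l as [|f l IH]; simpl; auto. rewrite Hs; auto. Qed.

Lemma state_comm {disp : Order.disp_t} {D : bLatticeType disp} {F : Type}
  (app : F -> D -> D) (d0 : D) indep (Hi : weak_independence app d0 indep)
  (Hs : bottom_strict app) rho g h tau :
  indep g h -> state app d0 (rho ++ g :: h :: tau) = state app d0 (rho ++ h :: g :: tau).
Proof.
  intros Igh. rewrite !state_cat /=. f_equal.
  destruct (classic (state app d0 rho = \bot%O)) as [E|N].
  - rewrite E !Hs; auto.
  - destruct Hi as [_ [_ Hc]]. symmetry; apply Hc; auto. exists rho; split; auto.
Qed.

Lemma state_move {disp : Order.disp_t} {D : bLatticeType disp} {F : Type}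
  (app : F -> D -> D) (d0 : D) indep (Hi : weak_independence app d0 indep)
  (Hs : bottom_strict app) us f : (forall g, List.In g us -> indep g f) ->
  forall rho tau, state app d0 (rho ++ us ++ f :: tau) = state app d0 (rho ++ f :: us ++ tau).
Proof.
  induction us as [|g us IH]; intros Hus rho tau; simpl; auto.
  rewrite -cat_rcons IH; [|intros; apply Hus; simpl; auto].
  rewrite cat_rcons. apply (state_comm Hi Hs). apply Hus; simpl; auto.
Qed.

Lemma perm_state {disp : Order.disp_t} {D : bLatticeType disp} {F : Type}
  (app : F -> D -> D) (d0 : D) indep (Hi : weak_independence app d0 indep)
  (Hs : bottom_strict app) (L : list (event F)) (CF : conflict_free indep L) :
  forall s1 s2 pre rho, lin_ok pre s1 -> lin_ok pre s2 -> same_set s1 s2 ->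
  incl_ev s1 L -> incl_ev s2 L ->
  state app d0 (rho ++ map label s1) = state app d0 (rho ++ map label s2).
Proof.
  induction s1 as [|a r1 IH]; intros s2 pre rho L1 L2 S I1 I2.
  - destruct s2 as [|b s2]; auto. destruct S as [_ S].
    destruct (S b) as [? [[] _]]; simpl; auto.
  - destruct L1 as [Na [Ia L1]].
    assert (Ma : mem_ev a s2) by (apply (proj1 S); simpl; auto).
    destruct (split_first Ma) as [u [a' [v [-> [Ea Hu]]]]].
    pose proof L2 as L2'. apply lin_ok_cat in L2'. destruct L2' as [Lu Lv]. simpl in Lv.
    destruct Lv as [Na' [Ia' Lv]].
    assert (Hind : forall y, List.In y u -> indep (label y) (label a)).
    { intros y Hy. apply (cf_indep CF).
      - apply I2; rewrite In_cat; auto.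
      - apply I1; simpl; auto.
      - auto.
      - intros Lt. apply (lin_ok_notin L2 (x := y)); [rewrite In_cat; auto|].
        eapply mem_ev_incl; eauto.
      - intros Lt. pose proof (lin_ok_hist Lu Hy) as Hh.
        pose proof (mem_ev_incl Lt Hh) as M. apply mem_ev_cat in M; destruct M as [M|M]; auto.
        destruct M as [y' [Hy' E]]. apply (Hu y' Hy'); apply ev_eq_sym; auto. }
    rewrite map_cat /= (ev_eq_label (ev_eq_sym Ea)).
    rewrite (state_move Hi Hs); [|intros g Hg; apply List.in_map_iff in Hg;
                          destruct Hg as [y [<- Hy]]; auto].
    rewrite -!cat_rcons -map_cat. apply IH with (pre ++ [:: a]); auto.
    + apply lin_ok_cat; split.
      * eapply lin_ok_weak; eauto.
        -- apply incl_In; intros z Hz; rewrite In_cat; auto.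
        -- intros y Hy M. apply mem_ev_cat in M; destruct M as [M|M].
           ++ apply (lin_ok_notin L2 (x := y)); auto. rewrite In_cat; auto.
           ++ apply mem_ev_one in M. apply (Hu y Hy M).
      * eapply lin_ok_weak; eauto.
        -- intros z Hz. apply In_cat in Hz. apply mem_ev_cat.
           destruct Hz as [Hz|[<-|[]]].
           ++ apply In_cat in Hz; destruct Hz as [Hz|Hz].
              ** left; apply mem_ev_cat; left; apply mem_ev_In; auto.
              ** right; apply mem_ev_In; auto.
           ++ left; apply mem_ev_cat; right; apply mem_ev_one; apply ev_eq_sym; auto.
        -- intros y Hy M. apply (lin_ok_notin Lv Hy).
           apply mem_ev_cat in M. apply mem_ev_cat.
           destruct M as [M|M].
           ++ apply mem_ev_cat in M; destruct M as [M|M].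
              ** left; apply mem_ev_cat; auto.
              ** right; apply mem_ev_one in M; apply mem_ev_one; eauto using ev_eq_trans.
           ++ left; apply mem_ev_cat; auto.
    + split.
      * intros x Hx. destruct (proj1 S x (or_intror Hx)) as [y [Hy E]].
        apply In_cat in Hy; destruct Hy as [Hy|[<-|Hy]].
        -- exists y; rewrite In_cat; auto.
        -- exfalso; apply (lin_ok_notin L1 Hx). apply mem_ev_cat; right.
           apply mem_ev_one; eauto using ev_eq_trans, ev_eq_sym.
        -- exists y; rewrite In_cat; auto.
      * intros y Hy. assert (Hy2 : List.In y (u ++ a' :: v)).
        { apply In_cat in Hy; rewrite In_cat; simpl; tauto. }
        destruct (proj2 S y Hy2) as [x [[<-|Hx] E]].
        -- exfalso. apply In_cat in Hy; destruct Hy as [Hy|Hy]; [apply (Hu y Hy E)|].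
           apply (lin_ok_notin Lv Hy). apply mem_ev_cat; right; apply mem_ev_one.
           eauto using ev_eq_trans.
        -- exists x; auto.
    + intros x Hx; apply I1; simpl; auto.
    + intros x Hx; apply I2. rewrite In_cat in Hx; rewrite In_cat; simpl; tauto.
Qed.

Lemma perm_state0 {disp : Order.disp_t} {D : bLatticeType disp} {F : Type}
  (app : F -> D -> D) (d0 : D) indep (Hi : weak_independence app d0 indep)
  (Hs : bottom_strict app) (L : list (event F)) (CF : conflict_free indep L)
  (s1 s2 : list (event F)) : lin_ok nil s1 -> lin_ok nil s2 -> same_set s1 s2 ->
  incl_ev s1 L -> incl_ev s2 L ->
  state app d0 (map label s1) = state app d0 (map label s2).
Proof. intros. exact (@perm_state _ _ _ app d0 indep Hi Hs L CF s1 s2 nil nil H H0 H1 H2 H3). Qed.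
Lemma exists_max_depth {F} (l : list (event F)) (Q : event F -> Prop) x :
  List.In x l -> Q x ->
  exists m, List.In m l /\ Q m /\ forall m', List.In m' l -> Q m' -> depth m' <= depth m.
Proof.
  revert x; induction l as [|y l IH]; intros x Hx Qx; [destruct Hx|].
  destruct (classic (exists x', List.In x' l /\ Q x')) as [[x' [Hx' Qx']]|N].
  - destruct (IH x' Hx' Qx') as [m [Hm [Qm Mm]]].
    destruct (classic (Q y /\ depth m <= depth y)) as [[Qy Le]|N2].
    + exists y; split; [simpl; auto|split; auto].
      intros m' [<-|Hm'] Qm'; [apply leqnn|exact (leq_trans (Mm m' Hm' Qm') Le)].
    + exists m; split; [simpl; auto|split; auto].
      intros m' [<-|Hm'] Qm'; auto.
      apply/negPn/negP; intros Hlt. apply N2; split; auto.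
      rewrite -ltnNge in Hlt. apply ltnW; auto.
  - destruct Hx as [<-|Hx]; [|exfalso; apply N; eauto].
    exists y; split; [simpl; auto|split; auto].
    intros m' [<-|Hm'] Qm'; auto. exfalso; apply N; eauto.
Qed.

Lemma lin_ok_rcons {F} (P : list (event F)) e :
  lin_ok nil (rcons P e) -> lin_ok nil P /\ ~ mem_ev e P /\ incl_ev (hist e) P.
Proof. rewrite -cats1; intros H; apply lin_ok_cat in H; simpl in H; tauto. Qed.

Lemma char_a {disp : Order.disp_t} {D : bLatticeType disp} {F : Type}
  (app : F -> D -> D) (d0 : D) (indep : F -> F -> Prop) (P : list (event F)) e :
  in_unf app d0 indep e -> lin_ok nil (rcons P e) ->
  forall x, List.In x (hist e) -> exists p, List.In p P /\ ev_eq x p /\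
    exists z, List.In z P /\ ~ indep (label e) (label z) /\ ev_le p z.
Proof.
  intros U Lin x Hx. destruct (in_unf_inv U) as [Uh [CCe [_ Mx]]].
  destruct (lin_ok_rcons Lin) as [LP [Ne Ie]].
  destruct (exists_max_depth (Q := fun m => ev_le x m) Hx (ev_le_refl x)) as [m [Hm [Qm Mm]]].
  assert (Max : maximal_in m (hist e)).
  { intros [m' [Hm' Lt]]. pose proof (Mm m' Hm') as Hd.
    assert (Q' : ev_le x m').
    { right. eapply ev_le_lt_trans; eauto. apply (in_unf_inv (Uh m' Hm')). }
    specialize (Hd Q'). pose proof (depth_lt Lt) as Hd2.
    rewrite leqNgt Hd2 in Hd; discriminate. }
  pose proof (Mx m Hm Max) as Dm.
  destruct (Ie x Hx) as [p [Hp Ep]]. destruct (Ie m Hm) as [z [Hz Ez]].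
  exists p; split; auto; split; auto. exists z; split; auto; split.
  - rewrite -(ev_eq_label Ez); auto.
  - eapply ev_le_eq; eauto.
Qed.

Lemma char_b {disp : Order.disp_t} {D : bLatticeType disp} {F : Type}
  (app : F -> D -> D) (d0 : D) (indep : F -> F -> Prop)
  (Hsym : forall f g, indep f g -> indep g f) (C : list (event F)) (P : list (event F)) e :
  conflict_free indep C -> (forall x, List.In x P -> List.In x C) -> List.In e C ->
  in_unf app d0 indep e -> lin_ok nil (rcons P e) ->
  forall p z, List.In p P -> List.In z P -> ~ indep (label e) (label z) -> ev_le p z ->
  mem_ev p (hist e).
Proof.
  intros CF HPC HeC U Lin p z Hp Hz Dz Le.
  destruct (in_unf_inv U) as [_ [CCe _]].
  destruct (lin_ok_rcons Lin) as [LP [Ne Ie]].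
  assert (Lt : ev_lt z e).
  { apply NNPP; intros N. apply (cf_dc (x := z) (y := e) CF); try (apply mem_ev_In; auto).
    repeat split; auto.
    - intros E. apply Ne. exists z; split; auto. apply ev_eq_sym; auto.
    - intros Lt. apply Ne. eapply mem_ev_incl; [exact Lt|]. apply (lin_ok_hist LP Hz). }
  apply (ev_le_lt_trans CCe Le Lt).
Qed.

Lemma F2_rcons {F} (s t : list (event F)) a b :
  List.Forall2 ev_eq s t -> ev_eq a b -> List.Forall2 ev_eq (rcons s a) (rcons t b).
Proof. induction 1; simpl; auto. Qed.

Lemma half_eq {disp : Order.disp_t} {D : bLatticeType disp} {F : Type}
  (app : F -> D -> D) (d0 : D) (indep : F -> F -> Prop)
  (Hsym : forall f g, indep f g -> indep g f) (C2 : list (event F)) P1 P2 e1 e2 :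
  List.Forall2 ev_eq P1 P2 -> label e1 = label e2 ->
  in_unf app d0 indep e1 -> lin_ok nil (rcons P1 e1) ->
  conflict_free indep C2 -> (forall x, List.In x P2 -> List.In x C2) -> List.In e2 C2 ->
  in_unf app d0 indep e2 -> lin_ok nil (rcons P2 e2) ->
  forall x, List.In x (hist e1) -> exists y, List.In y (hist e2) /\ ev_eq x y.
Proof.
  intros F2 Lab U1 L1 CF2 HP2 He2 U2 L2 x Hx.
  destruct (char_a U1 L1 Hx) as [p [Hp [Ep [z [Hz [Dz Le]]]]]].
  destruct (F2_mem F2 Hp) as [p' [Hp' Ep']]. destruct (F2_mem F2 Hz) as [z' [Hz' Ez']].
  assert (M : mem_ev p' (hist e2)).
  { eapply (char_b Hsym CF2 HP2 He2 U2 L2 Hp' Hz').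
    - rewrite -Lab -(ev_eq_label Ez'); auto.
    - eapply ev_le_eq; eauto. }
  destruct M as [y [Hy Ey]]. exists y; split; eauto using ev_eq_trans.
Qed.

Lemma uniq_lin {disp : Order.disp_t} {D : bLatticeType disp} {F : Type}
  (app : F -> D -> D) (d0 : D) (indep : F -> F -> Prop)
  (Hsym : forall f g, indep f g -> indep g f) (C1 C2 : list (event F)) :
  configuration app d0 indep C1 -> configuration app d0 indep C2 ->
  forall t1 t2, (forall x, List.In x t1 -> List.In x C1) -> (forall x, List.In x t2 -> List.In x C2) ->
  lin_ok nil t1 -> lin_ok nil t2 -> map label t1 = map label t2 -> List.Forall2 ev_eq t1 t2.
Proof.
  intros [U1 [_ CF1]] [U2 [_ CF2]] t1.
  induction t1 as [|P1 e1 IH] using last_ind; intros t2 H1 H2 L1 L2 Lab.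
  - destruct t2; [constructor|discriminate].
  - destruct t2 as [|P2 e2] using last_ind; [rewrite map_rcons in Lab; destruct P1; discriminate|].
    clear IHt2. rewrite !map_rcons in Lab. pose proof (rcons_inj Lab) as Lab'. injection Lab' as LabP Labe.
    assert (HP1 : forall x, List.In x P1 -> List.In x C1).
    { intros x Hx; apply H1; rewrite -cats1 In_cat; auto. }
    assert (HP2 : forall x, List.In x P2 -> List.In x C2).
    { intros x Hx; apply H2; rewrite -cats1 In_cat; auto. }
    assert (He1 : List.In e1 C1). { apply H1; rewrite -cats1 In_cat; simpl; auto. }
    assert (He2 : List.In e2 C2). { apply H2; rewrite -cats1 In_cat; simpl; auto. }
    assert (F2 : List.Forall2 ev_eq P1 P2).
    { apply IH; auto. apply (lin_ok_rcons L1). apply (lin_ok_rcons L2). }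
    apply F2_rcons; auto.
    apply ev_eq_intro; auto.
    + eapply (half_eq Hsym (C2 := C2)); eauto.
    + intros y Hy.
      destruct (half_eq (app := app) (d0 := d0) Hsym (C2 := C1) (F2_sym F2) (esym Labe) (U2 e2 He2) L2 CF1 HP1 He1 (U1 e1 He1) L1 Hy)
        as [x [Hx E]].
      exists x; split; auto; apply ev_eq_sym; auto.
Qed.
Lemma In_filter {T : Type} (p : pred T) (s : seq T) x :
  List.In x (filter p s) <-> List.In x s /\ p x.
Proof.
  induction s as [|y s IH]; simpl; [tauto|].
  case_eq (p y); intros Py; simpl; rewrite IH; split; intuition (subst; auto; try congruence).
Qed.

Lemma normalize {F} (s C : list (event F)) :
  incl_ev s C -> exists t, List.Forall2 ev_eq s t /\ (forall x, List.In x t -> List.In x C).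
Proof.
  induction s as [|a s IH]; intros I.
  - exists nil; split; [constructor|simpl; tauto].
  - destruct (I a) as [c [Hc E]]; [simpl; auto|].
    destruct IH as [t [F2 Ht]]; [intros x Hx; apply I; simpl; auto|].
    exists (c :: t); split; [constructor; auto|]. intros x [<-|Hx]; auto.
Qed.

Lemma inter_norm {F} (C : list (event F)) sigma :
  inter C sigma -> exists t, lin_ok nil t /\ same_set t C /\ map label t = sigma /\
    (forall x, List.In x t -> List.In x C).
Proof.
  intros [s [L [S Lab]]]. destruct (normalize (proj1 S)) as [t [F2 Ht]].
  exists t; split; [|split; [|split]]; auto.
  - eapply lin_ok_F2; eauto. split; apply incl_ev_refl.
  - eapply same_set_trans; [apply same_set_sym, F2_same; eauto|auto].
  - rewrite -(F2_label F2); auto.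
Qed.

Lemma uniq_conf {disp : Order.disp_t} {D : bLatticeType disp} {F : Type}
  (app : F -> D -> D) (d0 : D) (indep : F -> F -> Prop)
  (Hsym : forall f g, indep f g -> indep g f) (C1 C2 : list (event F)) sigma :
  configuration app d0 indep C1 -> configuration app d0 indep C2 ->
  inter C1 sigma -> inter C2 sigma -> same_set C1 C2.
Proof.
  intros K1 K2 I1 I2.
  destruct (inter_norm I1) as [t1 [L1 [S1 [Lab1 H1]]]].
  destruct (inter_norm I2) as [t2 [L2 [S2 [Lab2 H2]]]].
  pose proof (uniq_lin Hsym K1 K2 H1 H2 L1 L2 (etrans Lab1 (esym Lab2))) as F2.
  eapply same_set_trans; [apply same_set_sym; exact S1|].
  eapply same_set_trans; [apply F2_same; exact F2|exact S2].
Qed.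
Definition decb (P : Prop) : bool :=
  if excluded_middle_informative P then true else false.

Lemma decbP (P : Prop) : decb P = true <-> P.
Proof. unfold decb; destruct (excluded_middle_informative P); split; auto; discriminate. Qed.

Lemma decbT (P : Prop) : decb P = true -> P.
Proof. apply decbP. Qed.
Lemma decbI (P : Prop) : P -> decb P = true.
Proof. apply decbP. Qed.

Lemma existence {disp : Order.disp_t} {D : bLatticeType disp} {F : Type}
  (app : F -> D -> D) (d0 : D)
  (Hstrict : bottom_strict app)
  (indep : F -> F -> Prop) (Hindep : weak_independence app d0 indep) :
  forall sigma, is_run app d0 sigma ->
  exists C, configuration app d0 indep C /\ inter C sigma.
Proof.
  pose proof Hindep as [Hsym [Hirr _]].
  intros sigma; induction sigma as [|sg f IH] using last_ind; intros Hrun.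
  - exists nil; split.
    + split; [simpl; tauto|split; [intros e []|intros e1 e2 []]].
    + exists nil; simpl; split; auto; split; [split; apply incl_ev_refl|reflexivity].
  - assert (Hst : state app d0 (rcons sg f) = app f (state app d0 sg)).
    { rewrite -cats1 state_cat; reflexivity. }
    assert (Hr : is_run app d0 sg).
    { intros E; apply Hrun; rewrite Hst E Hstrict; reflexivity. }
    destruct (IH Hr) as [C' [[U' [CC' CF'] ] I']].
    destruct (inter_norm I') as [t [Lt [St [Labt Ht]]]].
    set (Pd := fun x => exists z, List.In z t /\ ~ indep f (label z) /\ ev_le x z).
    set (Pb := fun x => decb (Pd x)).
    assert (Pd_eq : forall x y, ev_eq x y -> Pd x -> Pd y).
    { intros x y E [z [Hz [Dz Le]]]. exists z; split; auto; split; auto.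
      eapply ev_le_eq; eauto using ev_eq_refl. }
    assert (Pb_eq : forall x y, ev_eq x y -> Pb x = Pb y).
    { intros x y E. unfold Pb. destruct (decb (Pd x)) eqn:Ex; destruct (decb (Pd y)) eqn:Ey; auto.
      - apply decbT in Ex. apply (Pd_eq _ _ E), decbI in Ex. congruence.
      - apply decbT in Ey. apply (Pd_eq _ _ (ev_eq_sym E)), decbI in Ey. congruence. }
    assert (Pd_down : forall x w, List.In x t -> Pd x -> mem_ev w (hist x) -> Pd w).
    { intros x w Hx [z [Hz [Dz Le]]] Mw. exists z; split; auto; split; auto. right.
      destruct Le as [E|Lt'].
      - eapply ev_lt_eq; [apply ev_eq_refl|exact E|exact Mw].
      - eapply ev_lt_trans; [|exact Mw|exact Lt']. apply (in_unf_inv (U' z (Ht z Hz))). }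
    set (H := filter Pb t).
    set (rest := filter (fun x => ~~ Pb x) t).
    assert (InH : forall x, List.In x H <-> List.In x t /\ Pd x).
    { intros x. unfold H. rewrite In_filter. unfold Pb. split; intros [A B]; split; auto; [apply decbT|apply decbI]; auto. }
    assert (Inrest : forall x, List.In x rest <-> List.In x t /\ ~ Pd x).
    { intros x. unfold rest. rewrite In_filter. unfold Pb.
      destruct (decb (Pd x)) eqn:E; simpl.
      - apply decbT in E; split; [intros [_ F0]; discriminate|tauto].
      - split; [intros [? _]; split; auto; intros P; apply decbI in P; congruence|intros [A _]; split; auto]. }
    assert (LH : lin_ok nil H).
    { apply lin_ok_filter with (pre := nil); [exact Lt|exact Pb_eq| | |].
      - intros x Hx Px M; apply (mem_ev_nil M).
      - intros x Hx Px w Mw Nw. exfalso. unfold Pb in Px, Nw.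
        apply decbT in Px. pose proof (Pd_down x w Hx Px Mw) as Pw. apply decbI in Pw.
        rewrite Pw in Nw; discriminate.
      - intros w M; destruct (mem_ev_nil M). }
    assert (Lrest : lin_ok H rest).
    { apply lin_ok_filter with (pre := nil); [exact Lt| | | |].
      - intros x y E; rewrite (Pb_eq x y E); auto.
      - intros x Hx Nx [h [Hh E]]. apply InH in Hh. destruct Hh as [_ Ph].
        apply (Pd_eq _ _ (ev_eq_sym E)), decbI in Ph. unfold Pb in Nx; rewrite Ph in Nx; discriminate.
      - intros x Hx Nx w Mw Pw. rewrite negbK in Pw. unfold Pb in Pw; apply decbT in Pw.
        pose proof (mem_ev_incl Mw (lin_ok_hist Lt Hx)) as [w' [Hw' E]].
        exists w'; split; auto. apply InH; split; auto. eapply Pd_eq; eauto.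
      - intros w M; destruct (mem_ev_nil M). }
    assert (CFH : conflict_free indep H).
    { intros e1 e2 H1 H2. apply InH in H1; apply InH in H2. apply CF'; apply Ht; tauto. }
    set (x0 := state app d0 (map label H)).
    assert (AllH : forall sg', inter H sg' -> state app d0 sg' = x0).
    { intros sg' [s [Ls [Ss Labs]]]. subst sg'. unfold x0.
      apply (perm_state0 Hindep Hstrict CFH Ls LH Ss (proj1 Ss) (@incl_ev_refl _ H)). }
    assert (LHR : lin_ok nil (H ++ rest)) by (apply lin_ok_cat; split; auto).
    assert (SHR : same_set (H ++ rest) t).
    { split; apply incl_In; intros y Hy.
      + rewrite In_cat in Hy; destruct Hy as [Hy|Hy]; [apply InH in Hy|apply Inrest in Hy]; tauto.
      + rewrite In_cat. destruct (classic (Pd y)); [left; apply InH|right; apply Inrest]; tauto. }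
    assert (IHR : incl_ev (H ++ rest) C').
    { apply incl_In; intros y Hy. rewrite In_cat in Hy; apply Ht.
      destruct Hy as [Hy|Hy]; [apply InH in Hy|apply Inrest in Hy]; tauto. }
    assert (IT : incl_ev t C') by (apply incl_In; auto).
    assert (Enab : app f x0 <> \bot%O).
    { intros E. apply Hrun. rewrite Hst -Labt.
      rewrite -(perm_state0 Hindep Hstrict CF' LHR Lt SHR IHR IT).
      have Eq : forall l, app f (state app d0 l) = state app d0 (l ++ [:: f])
        by (intros l; rewrite state_cat; reflexivity).
      rewrite Eq map_cat -catA.
      rewrite (state_move Hindep Hstrict).
      + rewrite state_cat /= -/x0 E foldl_bot; auto.
      + intros g Hg. apply List.in_map_iff in Hg. destruct Hg as [y [<- Hy]].
        apply Inrest in Hy. destruct Hy as [Hy Ny]. apply NNPP; intros N.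
        apply Ny. exists y; split; auto; split; [|apply ev_le_refl].
        intros I; apply N, Hsym; auto. }
    set (e := Ev f H).
    assert (Ue : in_unf app d0 indep e).
    { constructor.
      - intros x Hx; apply U', Ht, InH; auto.
      - intros x Hx w Hw. apply InH in Hx; destruct Hx as [Hx Px].
        destruct (lin_ok_hist Lt Hx Hw) as [w' [Hw' E]]. exists w'; split; auto.
        apply InH; split; auto. exact (Pd_eq _ _ E (Pd_down x w Hx Px (mem_ev_In Hw))).
      - exact CFH.
      - exists x0; split; auto. split.
        + intros y [sg' [Is ->]]. rewrite (AllH sg' Is). apply Order.POrderTheory.lexx.
        + intros z Hz. apply Hz. exists (map label H); split; auto.
          exists H; split; auto; split; auto; split; apply incl_ev_refl.
      - intros x Hx Mx. apply InH in Hx. destruct Hx as [Hx [z [Hz [Dz Le]]]].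
        destruct Le as [E|Lt'].
        + rewrite (ev_eq_label E); auto.
        + exfalso; apply Mx. exists z; split; auto. apply InH; split; auto.
          exists z; split; auto; split; auto; apply ev_le_refl. }
    assert (Dep_lt : forall y, List.In y t -> ~ indep f (label y) -> ev_lt y e).
    { intros y Hy Dy. apply mem_ev_In. apply InH; split; auto. exists y; split; auto; split; auto.
      apply ev_le_refl. }
    exists (rcons t e). split; [split; [|split]|].
    + intros x Hx. rewrite -cats1 In_cat in Hx. destruct Hx as [Hx|[<-|[]]]; auto.
    + intros x Hx. rewrite -cats1 In_cat in Hx. destruct Hx as [Hx|[<-|[]]].
      * eapply incl_ev_trans; [apply (lin_ok_hist Lt Hx)|]. apply incl_In; intros y Hy.
        rewrite -cats1 In_cat; auto.
      * apply incl_In; intros y Hy. simpl in Hy. apply InH in Hy. rewrite -cats1 In_cat; tauto.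
    + apply cf_of_dc.
      * intros x Hx. rewrite -cats1 In_cat in Hx. destruct Hx as [Hx|[<-|[]]].
        -- eapply incl_ev_trans; [apply (lin_ok_hist Lt Hx)|]. apply incl_In; intros y Hy.
           rewrite -cats1 In_cat; auto.
        -- apply incl_In; intros y Hy. simpl in Hy. apply InH in Hy. rewrite -cats1 In_cat; tauto.
      * intros a b Ha Hb. rewrite -cats1 In_cat in Ha. rewrite -cats1 In_cat in Hb.
        destruct Ha as [Ha|[<-|[]]]; destruct Hb as [Hb|[<-|[]]].
        -- apply (cf_dc CF'); apply mem_ev_In; auto.
        -- intros [_ [N2 [_ N4]]]. apply N2, Dep_lt; [assumption|]. intros I; apply N4; simpl; apply Hsym; exact I.
        -- intros [_ [_ [N3 N4]]]. apply N3, Dep_lt; [assumption|exact N4].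
        -- intros [N1 _]. apply N1, ev_eq_refl.
    + exists (rcons t e); split; [|split; [split; apply incl_ev_refl|]].
      * rewrite -cats1. apply lin_ok_cat; split; auto. simpl. split; [|split; auto].
        -- intros [y [Hy E]]. assert (Ly : label y = f) by (rewrite -(ev_eq_label E); reflexivity).
           assert (Lt' : ev_lt y e) by (apply Dep_lt; auto; rewrite Ly; apply Hirr).
           apply (ev_lt_irrefl (a := e)). eapply ev_lt_eq; [exact (ev_eq_sym E)|apply ev_eq_refl|exact Lt'].
        -- apply incl_In; intros y Hy; apply InH in Hy; tauto.
      * rewrite map_rcons Labt; reflexivity.
Qed.

Unset Implicit Arguments.

Theorem theorem2 (disp : Order.disp_t) (D : bLatticeType disp) (F : Type)
  (app : F -> D -> D) (d0 : D)
  (Hmono : monotone_transformers app) (Hstrict : bottom_strict app)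
  (indep : F -> F -> Prop) (Hindep : weak_independence app d0 indep)
  (sigma : seq F) (Hrun : is_run app d0 sigma) :
  exists C : list (event F),
    configuration app d0 indep C /\ inter C sigma /\
    (forall C', configuration app d0 indep C' -> inter C' sigma -> same_set C C').
Proof.
  destruct (existence Hstrict Hindep Hrun) as [C [K I]].
  exists C; split; auto; split; auto.
  intros C' K' I'. eapply uniq_conf; eauto. apply (proj1 Hindep).
Qed.
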